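(* Let $(X_v)_{v\in V}$ be a BN on the DAG $\mathcal G$ with states $\mathcal A$, let $f:\mathcal A\to\mathcal B$ and $U_v=f(X_v)$. Let $v\in V$ and $b_{pa(v)}\in\mathcal B^{pa(v)}$ be such that $f^{-1}(b_{pa(v)})$ consists of a single element $a_{pa(v)}\in\mathcal A^{pa(v)}$. Then for every $b_{nd^*(v)}\in\mathcal B^{nd^*(v)}$ with $b_{nd^*(v)}|_{pa(v)}=b_{pa(v)}$ and $\mathbb P(U_{nd(v)}=b_{nd(v)})>0$, $$\mathbb P(U_v=b_v\mid U_{nd(v)}=b_{nd(v)})=\mathbb P(U_v=b_v\mid U_{pa(v)}=b_{pa(v)}).$$
   Context: $\mathcal G=(V,E)$ is a finite DAG; $pa(v)$ is the set of parents of $v$; $nd(v)$ is the set of non-descendants of $v$ (vertices other than $v$ not reachable from $v$ by a directed path), $nd^*(v)=nd(v)\cup\{v\}$. A BN on $\mathcal G$ with states $\mathcal A$ (finite set) is a random vector $(X_v)_{v\in V}$ with values in $\mathcal A^V$ whose law factorises as $\mathbb P(X=x)=\prod_{v}\mathbb P(X_v=x_v\mid X_{pa(v)}=x_{pa(v)})$. $f:\mathcal A\to\mathcal B$ is a surjection onto a finite set, applied coordinatewise; $f^{-1}(b_W)\subseteq\mathcal A^W$ is the preimage of $b_W\in\mathcal B^W$; for $W'\subseteq W$, $b_{W'}=b_W|_{W'}$ is the restriction. $\mathbb P(U_W=b_W)$ is the joint probability of the coordinates in $W$. *)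

(* Defs.v *)
From mathcomp Require Import all_boot all_order all_algebra.
Set Implicit Arguments. Unset Strict Implicit. Unset Printing Implicit Defensive.
Import Order.TTheory GRing.Theory Num.Theory.
Local Open Scope ring_scope.

Section BN.
Variables (V : finType) (e : rel V).

(* e u v means there is a directed edge u -> v. *)
Definition dag : Prop := forall u v, e u v -> ~~ connect e v u.

(* parents, non-descendants (v excluded, since connect is reflexive), nd^* *)
Definition pa (v : V) : {set V} := [set u | e u v].
Definition nd (v : V) : {set V} := [set u | ~~ connect e v u].
Definition ndstar (v : V) : {set V} := v |: nd v.

Variables (R : realFieldType) (A : finType).

(* A law of the random vector (X_v)_v on A^V, as a probability mass function. *)
Definition is_pmf (p : {ffun V -> A} -> R) : Prop :=
  (forall x, 0 <= p x) /\ \sum_x p x = 1.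

(* P(X_W = x_W), where x_W is the restriction of x to W *)
Definition margX (p : {ffun V -> A} -> R) (W : {set V}) (x : {ffun V -> A}) : R :=
  \sum_(y : {ffun V -> A} | [forall w in W, y w == x w]) p y.

(* P(X_v = x_v | X_pa(v) = x_pa(v)) ; division by 0 gives 0 in MathComp *)
Definition condX (p : {ffun V -> A} -> R) (v : V) (x : {ffun V -> A}) : R :=
  margX p (v |: pa v) x / margX p (pa v) x.

Definition is_BN (p : {ffun V -> A} -> R) : Prop :=
  is_pmf p /\ forall x, p x = \prod_(v : V) condX p v x.

Variables (B : finType) (f : A -> B).

(* P(U_W = b_W) with U_v = f(X_v); b_W is the restriction of b to W. *)
Definition margU (p : {ffun V -> A} -> R) (W : {set V}) (b : {ffun V -> B}) : R :=
  \sum_(y : {ffun V -> A} | [forall w in W, f (y w) == b w]) p y.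

Definition condU (p : {ffun V -> A} -> R) (v : V) (W : {set V})
  (b : {ffun V -> B}) : R :=
  margU p (v |: W) b / margU p W b.

(* f^{-1}(b_W) consists of the single element a_W (assignments identified with
   their restrictions to W). *)
Definition preimage_singleton (W : {set V}) (b : {ffun V -> B}) (a : {ffun V -> A}) : Prop :=
  forall a' : {ffun V -> A},
    (forall w, w \in W -> f (a' w) = b w) <-> (forall w, w \in W -> a' w = a w).

End BN.

(* Main.v *)
Require Import Defs.
From mathcomp Require Import all_boot all_order all_algebra.
Import Order.TTheory GRing.Theory Num.Theory.
Local Open Scope ring_scope.

Section Helpers.
Variables (V : finType) (e : rel V) (R : realFieldType) (A : finType).
Implicit Types (x y z : {ffun V -> A}) (W T : {set V}).

Definition agree W y x := [forall w in W, y w == x w].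
Definition upd x (s : V) (c : A) : {ffun V -> A} :=
  [ffun u => if u == s then c else x u].

Lemma agreeP W y x : reflect (forall w, w \in W -> y w = x w) (agree W y x).
Proof.
apply: (iffP forallP) => H w.
  by move=> Hw; move: (H w); rewrite Hw => /eqP.
by apply/implyP => Hw; rewrite H.
Qed.

Lemma margX_ext (p : {ffun V -> A} -> R) W x x' :
  (forall w, w \in W -> x w = x' w) -> margX p W x = margX p W x'.
Proof.
move=> H; apply: eq_bigl => y; apply/forallP/forallP => K w; move: (K w);
  by case Hw: (w \in W) => //= /eqP ->; rewrite H.
Qed.

Lemma agree_upd W x y s c : s \notin W ->
  agree W y x && (y s == c) = agree (s |: W) y (upd x s c).
Proof.
move=> Hs; apply/andP/agreeP.
  case=> /agreeP H /eqP Hc w; rewrite in_setU1 ffunE; case: eqP => [->|_]//= Hw.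
  exact: H.
move=> H; split; last by apply/eqP; rewrite H ?setU11 // ffunE eqxx.
apply/agreeP => w Hw; rewrite H ?ffunE; last by rewrite in_setU1 Hw orbT.
by case: eqP => // Ew; rewrite -Ew Hw in Hs.
Qed.

Lemma margX_split (p : {ffun V -> A} -> R) W x s : s \notin W ->
  margX p W x = \sum_c margX p (s |: W) (upd x s c).
Proof.
move=> Hs; rewrite /margX (partition_big (fun y => y s) xpredT) //=.
apply: eq_bigr => c _; apply: eq_bigl => y.
by have := @agree_upd W x y s c Hs; rewrite /agree.
Qed.

Lemma margX_setT (p : {ffun V -> A} -> R) x : margX p setT x = p x.
Proof.
rewrite /margX (eq_bigl (fun y => y == x)) ?big_pred1_eq // => y.
apply/forallP/eqP => [H|->]; last by move=> w; rewrite eqxx implybT.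
by apply/ffunP => w; move: (H w); rewrite in_setT => /eqP.
Qed.

Lemma margX_ge0 (p : {ffun V -> A} -> R) W x :
  (forall y, 0 <= p y) -> 0 <= margX p W x.
Proof. by move=> H; apply: sumr_ge0 => y _. Qed.

Lemma margX_le (p : {ffun V -> A} -> R) W T x :
  (forall y, 0 <= p y) -> W \subset T -> margX p T x <= margX p W x.
Proof.
move=> H sWT; rewrite /margX [X in _ <= X](bigID (fun y => agree T y x)) /=.
have -> : \sum_(y : {ffun V -> A} | [forall w in W, y w == x w] && agree T y x) p y =
          \sum_(y : {ffun V -> A} | [forall w in T, y w == x w]) p y.
  apply: eq_bigl => y; rewrite /agree.
  case HT: [forall w in T, y w == x w]; rewrite ?andbF ?andbT //.
  apply/forallP => w; apply/implyP => Hw.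
  by move/forallP: HT => /(_ w); rewrite (subsetP sWT w Hw).
by rewrite lerDl; apply: sumr_ge0.
Qed.

Definition pclosed T := forall u w, u \in T -> e w u -> w \in T.

Lemma exists_min T : dag e -> T != setT ->
  exists s, s \notin T /\ forall w, e w s -> w \in T.
Proof.
move=> Hdag HT.
have [s0 Hs0] : exists s0, s0 \notin T.
  case: (pickP (fun s => s \notin T)) => [s Hs|H]; first by exists s.
  by case/eqP: HT; apply/setP => s; move: (H s) => /negbFE ->; rewrite in_setT.
case: (@arg_minnP V s0 (fun s => s \notin T) (fun s => #|[set w | connect e w s]|) Hs0) => s Hs Hmin.
exists s; split => // w Hws; apply/negPn/negP => Hw.
have := Hmin w Hw; rewrite leqNgt => /negP; apply; apply: proper_card.
apply/properP; split.
  apply/subsetP => u; rewrite !inE => Huw.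
  by apply: connect_trans Huw (connect1 Hws).
by exists s; rewrite !inE ?connect0 //; apply: Hdag.
Qed.

Lemma condX_ext (p : {ffun V -> A} -> R) u x x' :
  (forall w, w \in u |: pa e u -> x w = x' w) -> condX e p u x = condX e p u x'.
Proof.
move=> H; rewrite /condX (@margX_ext p _ _ _ H); congr (_ / _); apply: margX_ext => w Hw.
by apply: H; rewrite in_setU1 Hw orbT.
Qed.

Lemma notin_pa u : dag e -> u \notin pa e u.
Proof. by move=> Hdag; rewrite inE; apply/negP => Huu; move: (Hdag _ _ Huu); rewrite connect0. Qed.

Lemma marg_prod (k : V -> {ffun V -> A} -> R) : dag e ->
  (forall u x x', (forall w, w \in u |: pa e u -> x w = x' w) -> k u x = k u x') ->
  (forall u x, \sum_c k u (upd x u c) = 1) ->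
  forall n T, (#|~: T| <= n)%N -> pclosed T ->
  forall x, margX (fun y => \prod_u k u y) T x = \prod_(u in T) k u x.
Proof.
move=> Hdag Hext Hsum1; elim=> [|n IH] T HT Hcl x.
  have -> : T = setT by apply/setP => u; move: HT; rewrite leqn0 cards_eq0 => /eqP/setP/(_ u);
    rewrite !inE => /negbFE ->.
  by rewrite margX_setT; apply: eq_bigl => u; rewrite in_setT.
case: (eqVneq T setT) => [->|HneT].
  by rewrite margX_setT; apply: eq_bigl => u; rewrite in_setT.
have [s [HsT Hpa]] := @exists_min T Hdag HneT.
have Hcl' : pclosed (s |: T).
  move=> u w; rewrite in_setU1 => /orP [/eqP ->|Hu] Hw; rewrite in_setU1.
    by rewrite Hpa ?orbT.
  by rewrite (Hcl u) ?orbT.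
have HT' : (#|~: (s |: T)| <= n)%N.
  rewrite setCU -ltnS; apply: leq_trans HT; apply: proper_card.
  by apply/properP; split; [apply: subsetIr | exists s; rewrite !inE ?eqxx // HsT].
rewrite (@margX_split _ _ x _ HsT) /=.
rewrite (eq_bigr (fun c => k s (upd x s c) * \prod_(u in T) k u (upd x s c))); last first.
  by move=> c _; rewrite (IH _ HT' Hcl') big_setU1.
have Hinv c : \prod_(u in T) k u (upd x s c) = \prod_(u in T) k u x.
  apply: eq_bigr => u Hu; apply: Hext => w; rewrite in_setU1 inE ffunE.
  case: (w =P s) => // -> /orP [/eqP Eu| Hsu]; first by move: HsT; rewrite Eu Hu.
  by move: HsT; rewrite (Hcl u s Hu Hsu).
under eq_bigr => c _ do rewrite Hinv.
by rewrite -mulr_suml Hsum1 mul1r.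
Qed.

Lemma condX_ge0 (p : {ffun V -> A} -> R) u x :
  (forall y, 0 <= p y) -> 0 <= condX e p u x.
Proof. by move=> H; rewrite /condX divr_ge0 // margX_ge0. Qed.

Lemma condX_sum (p : {ffun V -> A} -> R) u x : dag e ->
  margX p (pa e u) x != 0 -> \sum_c condX e p u (upd x u c) = 1.
Proof.
move=> Hdag Hn0.
have Hden c : margX p (pa e u) (upd x u c) = margX p (pa e u) x.
  apply: margX_ext => w Hw; rewrite ffunE; case: (w =P u) => // Ew.
  by move: Hw; rewrite Ew (negbTE (notin_pa u Hdag)).
rewrite /condX; under eq_bigr => c _ do rewrite Hden.
by rewrite -mulr_suml -margX_split ?notin_pa // divff.
Qed.

Definition kern (p : {ffun V -> A} -> R) (y0 : {ffun V -> A}) u y : R :=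
  if margX p (pa e u) y != 0 then condX e p u y else ((y u == y0 u)%:R).

Lemma pclosed0 : pclosed set0.
Proof. by move=> u w; rewrite inE. Qed.

Lemma pclosedT : pclosed setT.
Proof. by move=> u w; rewrite !inE. Qed.

Lemma BN_kern (p : {ffun V -> A} -> R) y0 : dag e -> is_BN e p ->
  forall T, pclosed T -> forall x,
  margX p T x = \prod_(u in T) kern p y0 u x.
Proof.
move=> Hdag [[Hp0 Hp1] Hfac].
have Hext : forall u x x', (forall w, w \in u |: pa e u -> x w = x' w) ->
    kern p y0 u x = kern p y0 u x'.
  move=> u x x' H; rewrite /kern (@condX_ext p u x x' H).
  have -> : margX p (pa e u) x = margX p (pa e u) x'.
    by apply: margX_ext => w Hw; apply: H; rewrite in_setU1 Hw orbT.
  by rewrite H ?setU11.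
have Hsum1 : forall u x, \sum_c kern p y0 u (upd x u c) = 1.
  move=> u x.
  have Hden c : margX p (pa e u) (upd x u c) = margX p (pa e u) x.
    apply: margX_ext => w Hw; rewrite ffunE; case: (w =P u) => // Ew.
    by move: Hw; rewrite Ew (negbTE (notin_pa u Hdag)).
  rewrite /kern.
  case: (boolP (margX p (pa e u) x != 0)) => Hn0.
    rewrite (eq_bigr (fun c => condX e p u (upd x u c))); last by move=> c _; rewrite Hden Hn0.
    exact: condX_sum.
  rewrite (eq_bigr (fun c => ((upd x u c) u == y0 u)%:R)); last by move=> c _; rewrite Hden (negbTE Hn0).
  rewrite (bigD1 (y0 u)) //= ffunE eqxx eqxx big1 ?addr0 // => c Hc.
  by rewrite ffunE eqxx (negbTE Hc).
pose Q y := \prod_u kern p y0 u y.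
have HQ T : pclosed T -> forall x, margX Q T x = \prod_(u in T) kern p y0 u x.
  by move=> HT x; apply: (@marg_prod _ Hdag Hext Hsum1 #|~: T|).
have Hk0 u y : 0 <= kern p y0 u y.
  by rewrite /kern; case: ifP => _; [apply: condX_ge0 | apply: ler0n].
have Hle y : p y <= Q y.
  case: (pickP (fun u => margX p (pa e u) y == 0)) => [u Hu|H].
    rewrite Hfac (bigD1 u) //= {1}/condX (eqP Hu) invr0 mulr0 mul0r.
    by rewrite /Q; apply: prodr_ge0 => w _.
  rewrite Hfac /Q le_eqVlt; apply/orP; left.
  apply/eqP; apply: eq_bigr => u _; rewrite /kern.
  by move: (H u) => /= ->.
have HsumQ : \sum_y Q y = 1.
  have := HQ set0 pclosed0 y0; rewrite big_set0 => <-.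
  by rewrite /margX; apply: eq_bigl => y; symmetry; apply/forallP => w; rewrite inE.
have HpQ y : p y = Q y.
  have H0 : \sum_(i | xpredT i) (Q i - p i) = 0 by rewrite sumrB HsumQ Hp1 subrr.
  have Hge : forall i, xpredT i -> 0 <= Q i - p i by move=> i _; rewrite subr_ge0.
  have H := psumr_eq0P Hge H0 isT.
  by apply/eqP; rewrite eq_sym -subr_eq0 H.
move=> T HT x; rewrite -HQ //; apply: eq_bigr => y _; exact: HpQ.
Qed.
Definition canon W (a0 z : {ffun V -> A}) : {ffun V -> A} :=
  [ffun u => if u \in W then z u else a0 u].

Lemma partition_canon (F : {ffun V -> A} -> R) (P : pred {ffun V -> A}) W a0 :
  \sum_(y | P y) F y =
  \sum_(z | canon W a0 z == z) \sum_(y | P y && agree W y z) F y.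
Proof.
rewrite (partition_big (canon W a0) (fun z => canon W a0 z == z)).
  apply: eq_bigr => z /eqP Hz; apply: eq_bigl => y; congr (_ && _).
  apply/eqP/agreeP => [<- w Hw|H]; first by rewrite ffunE Hw.
  rewrite -Hz; apply/ffunP => u; rewrite !ffunE; case: ifP => // Hu.
  by rewrite H.
move=> y _; apply/eqP/ffunP => u; rewrite !ffunE; case: ifP => //.
by move=> ->.
Qed.

End Helpers.
Arguments upd {V A}.
Arguments agree {V A}.
Arguments canon {V A}.

Theorem mainTheorem3 (V : finType) (e : rel V) (R : realFieldType)
  (A B : finType) (f : A -> B) (p : {ffun V -> A} -> R) :
  dag e ->
  (forall y : B, exists x : A, f x = y) ->
  is_BN e p ->
  forall (v : V) (b : {ffun V -> B}),
    (exists a : {ffun V -> A}, preimage_singleton f (pa e v) b a) ->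
    0 < margU f p (nd e v) b ->
    condU f p v (nd e v) b = condU f p v (pa e v) b.
Proof.
move=> Hdag _ HBN v b [a Hsing] Hpos.
have Hp0 : forall y, 0 <= p y by case: HBN => [[]].
set N := nd e v.
have HvN : v \notin N by rewrite inE connect0.
have HpaN : pa e v \subset N.
  by apply/subsetP => w; rewrite !inE => /Hdag.
have HclN : pclosed V e N.
  move=> u w; rewrite !inE => Hu Hw; apply/negP => Hvw; move/negP: Hu; apply.
  exact: connect_trans Hvw (connect1 Hw).
have HclvN : pclosed V e (v |: N).
  move=> u w; rewrite in_setU1 => /orP [/eqP ->|Hu] Hw; rewrite in_setU1.
    by rewrite (subsetP HpaN) ?orbT // inE.
  by rewrite (HclN u w Hu Hw) orbT.
have Hfact z : margX p (v |: N) z = condX e p v z * margX p N z.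
  case: (eqVneq (margX p (pa e v) z) 0) => H0.
    have HN : margX p N z = 0.
      apply/eqP; rewrite eq_le margX_ge0 // andbT -H0; exact: margX_le.
    have HvN' : margX p (v |: N) z = 0.
      apply/eqP; rewrite eq_le margX_ge0 // andbT -H0; apply: margX_le => //.
      by apply: subset_trans HpaN (subsetUr _ _).
    by rewrite HN HvN' mulr0.
  rewrite !(@BN_kern _ _ _ _ p a Hdag HBN) // big_setU1 //= /kern H0.
  done.
have Hsing1 (y : {ffun V -> A}) : [forall w in pa e v, f (y w) == b w] = [forall w in pa e v, y w == a w].
  apply/forallP/forallP => H w; apply/implyP => Hw.
    apply/eqP; move: w Hw; apply: (proj1 (Hsing y)) => w' Hw'.
    by move: (H w'); rewrite Hw' => /eqP.
  apply/eqP; move: w Hw; apply: (proj2 (Hsing y)) => w' Hw'.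
  by move: (H w'); rewrite Hw' => /eqP.
pose kap := \sum_(c | f c == b v) condX e p v (upd a v c).
have HvnotPa : v \notin pa e v by apply: notin_pa.
have Hden c : margX p (pa e v) (upd a v c) = margX p (pa e v) a.
  apply: margX_ext => w Hw; rewrite ffunE; case: (w =P v) => // Ew.
  by move: Hw; rewrite Ew (negbTE HvnotPa).
have Hforall W (y : {ffun V -> A}) : [forall w in v |: W, f (y w) == b w] =
    (f (y v) == b v) && [forall w in W, f (y w) == b w].
  apply/forallP/andP => [H|[H1 /forallP H2] w].
    split; first by move: (H v); rewrite setU11.
    by apply/forallP => w; apply/implyP => Hw; move: (H w); rewrite in_setU1 Hw orbT.
  rewrite in_setU1; case: (w =P v) => [->|_] //=; exact: H2.
have Hpa : condU f p v (pa e v) b = kap.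
  rewrite /condU /margU.
  have -> : \sum_(y : {ffun V -> A} | [forall w in pa e v, f (y w) == b w]) p y = margX p (pa e v) a.
    by apply: eq_bigl => y; rewrite Hsing1.
  rewrite (partition_big (fun y : {ffun V -> A} => y v) (fun c => f c == b v)); last first.
    by move=> y; rewrite Hforall => /andP [].
  rewrite /kap /condX mulr_suml; apply: eq_bigr => c Hc; rewrite Hden; congr (_ / _).
  apply: eq_bigl => y; have := @agree_upd V A (pa e v) a y v c HvnotPa; rewrite /agree => <-; rewrite Hforall Hsing1.
  by case: (y v =P c) => [->|]; rewrite ?Hc ?andbT ?andbF.
have HN : margU f p (v |: N) b = kap * margU f p N b.
  rewrite /margU (@partition_canon V R A _ _ N a) [X in _ = _ * X](@partition_canon V R A _ _ N a).
  rewrite mulr_sumr; apply: eq_bigr => z _.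
  have Hag (y : {ffun V -> A}) : agree N y z -> [forall w in N, f (y w) == b w] = [forall w in N, f (z w) == b w].
    move=> /agreeP H; apply: eq_forallb => w; case Hw: (w \in N) => //=; by rewrite H.
  case HPz: [forall w in N, f (z w) == b w]; last first.
    rewrite !big_pred0 ?mulr0 // => y; apply/negP => /andP [Hy Hyz].
      by move: Hy; rewrite (Hag y Hyz) HPz.
    by move: Hy; rewrite Hforall (Hag y Hyz) HPz andbF.
  have -> : \sum_(y : {ffun V -> A} | [forall w in N, f (y w) == b w] && agree N y z) p y = margX p N z.
    apply: eq_bigl => y; case Hyz: (agree N y z); rewrite ?andbF ?andbT //.
    by rewrite (Hag y Hyz) HPz.
  rewrite (partition_big (fun y : {ffun V -> A} => y v) (fun c => f c == b v)); last first.
    by move=> y; rewrite Hforall => /andP [/andP []].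
  rewrite /kap mulr_suml; apply: eq_bigr => c Hc.
  have -> : \sum_(y : {ffun V -> A} | [forall w in v |: N, f (y w) == b w] && agree N y z && (y v == c)) p y
      = margX p (v |: N) (upd z v c).
    apply: eq_bigl => y; have := @agree_upd V A N z y v c HvN; rewrite {2}/agree => <-; rewrite Hforall -andbA.
    case Hyz: (agree N y z); rewrite ?andbF //= (Hag y Hyz) HPz andbT.
    by case: (y v =P c) => [->|]; rewrite ?Hc ?andbT ?andbF.
  rewrite Hfact; congr (_ * _).
    apply: condX_ext => w; rewrite in_setU1 !ffunE; case: (w =P v) => //= _ Hw.
    have Hz : [forall w in pa e v, f (z w) == b w].
      apply/forallP => w'; apply/implyP => Hw'; move/forallP: HPz => /(_ w').
      by rewrite (subsetP HpaN w' Hw').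
    by move: Hz; rewrite Hsing1 => /forallP /(_ w); rewrite Hw => /eqP.
  apply: margX_ext => w Hw; rewrite ffunE; case: (w =P v) => // Ew.
  by move: HvN; rewrite -Ew Hw.
rewrite Hpa /condU HN mulfK //; exact: lt0r_neq0.
Qed.
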